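(* Let $\pi$ be a finitely refining sequence of partitions of $[0,1]$. Then for all $n\ge1$, $m\le n-1$ and $k$, $$\underline{\pi^n}\le a^n_{m,k}(1)\le|\pi^n|.$$ If moreover $\pi$ is balanced, there is a constant $C<\infty$ (depending only on $\pi$) such that for all $n\ge1$ and all distinct $(m,k),(m',k')$ with $m,m'\le n-1$ and $[t^{m,k}_1,t^{m,k}_3]\subseteq[t^{m',k'}_1,t^{m',k'}_3]$, $$|b^n_{m,k,m',k'}(1)|\le C\,(|\pi^n|-\underline{\pi^n})\sqrt{|\pi^m|/|\pi^{m'}|},$$ while $b^n_{m,k,m',k'}(1)=0$ if the supports of $e^\pi_{m,k}$ and $e^\pi_{m',k'}$ have disjoint interiors.
   Context: A partition of $[0,1]$ is a finite set $\{0=t_0<t_1<\dots<t_N=1\}$; for a partition $\pi^n=\{0=t^n_0<\dots<t^n_{N(\pi^n)}=1\}$, $N(\pi^n)$ is its number of intervals, $|\pi^n|=\max_i(t^n_{i+1}-t^n_i)$ and $\underline{\pi^n}=\min_i(t^n_{i+1}-t^n_i)$. A sequence $\pi=(\pi^n)_{n\ge0}$ of partitions of $[0,1]$, with the convention $\pi^0=\{0,1\}$, is finitely refining if $\pi^n\subseteq\pi^{n+1}$ for all $n$, $|\pi^n|\to0$, and there is $M<\infty$ such that for every $n$ each interval $[t^n_i,t^n_{i+1}]$ contains at most $M$ points of $\pi^{n+1}$. It is balanced if $\sup_{n\ge1}|\pi^n|/\underline{\pi^n}<\infty$. Haar and Schauder functions of a finitely refining $\pi$: for each level $m\ge0$ and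 each interval $[u_0,u_r]$ of $\pi^m$, let $u_0<u_1<\dots<u_r$ be the points of $\pi^{m+1}$ lying in $[u_0,u_r]$. For each $i\in\{2,\dots,r\}$ put $t_1=u_0$, $t_2=u_{i-1}$, $t_3=u_i$ and define $\psi(s)=\sqrt{\frac{t_3-t_2}{(t_2-t_1)(t_3-t_1)}}$ for $s\in[t_1,t_2)$, $\psi(s)=-\sqrt{\frac{t_2-t_1}{(t_3-t_2)(t_3-t_1)}}$ for $s\in[t_2,t_3)$, $\psi(s)=0$ otherwise, and $e(t)=\int_0^t\psi(s)\,ds$ (a continuous hat function vanishing outside $[t_1,t_3]$, affine on $[t_1,t_2]$ and on $[t_2,t_3]$, maximal at $t_2$). Ranging over all intervals of $\pi^m$ and all such $i$ gives $N(\pi^{m+1})-N(\pi^m)$ functions at level $m$, enumerated in a fixed order as $\psi_{m,k}$, $e^\pi_{m,k}$, $k=0,\dots,N(\pi^{m+1})-N(\pi^m)-1$, with associated points $t^{m,k}_1<t^{m,k}_2<t^{m,k}_3$ (so $[t^{m,k}_1,t^{m,k}_3]$ is the support of $e^\pi_{m,k}$ and $t^{m,k}_2$ its maximum point). Coefficients: for $n\ge1$, $t\in[0,1]$, let $\Delta t^n_i=t^n_{i+1}\wedge t-t^n_i\wedge t$. For $m\le n-1$ and each $k$, with $t_j=t^{m,k}_j$, let $S_1=\sum_{i:[t^n_i,t^n_{i+1}]\subseteq[t_1,t_2]}(\Delta t^n_i)^2$, $S_2=\sum_{i:[t^n_i,t^n_{i+1}]\subseteq[t_2,t_3]}(\Delta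 t^n_i)^2$ and $a^n_{m,k}(t)=\frac{1}{t_3-t_1}\Big(S_1\frac{t_3-t_2}{t_2-t_1}+S_2\frac{t_2-t_1}{t_3-t_2}\Big)$. For distinct $(m,k),(m',k')$ with $m,m'\le n-1$: if $[t^{m,k}_1,t^{m,k}_3]\subseteq[t^{m',k'}_1,t^{m',k'}_3]$, set $b^n_{m,k,m',k'}(t)=\psi_{m',k'}(t^{m,k}_1)\Big(\frac{S_1}{t_2-t_1}-\frac{S_2}{t_3-t_2}\Big)\sqrt{\frac{(t_2-t_1)(t_3-t_2)}{t_3-t_1}}$ (with $S_1,S_2,t_j$ computed for $(m,k)$) and set $b^n_{m',k',m,k}(t)=b^n_{m,k,m',k'}(t)$; if neither support contains the other, set $b^n_{m,k,m',k'}(t)=0$. (Two distinct supports are always either nested or have disjoint interiors.) *)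

(* Defs.v *)
From HB Require Import structures.
From mathcomp Require Import all_boot all_order all_algebra.
From mathcomp Require Import all_classical all_reals all_analysis.
Set Implicit Arguments. Unset Strict Implicit. Unset Printing Implicit Defensive.
Import Order.TTheory GRing.Theory Num.Theory numFieldNormedType.Exports.
Local Open Scope classical_set_scope.
Local Open Scope ring_scope.

Section Defs.
Variable R : realType.

Definition is_partition (p : seq R) : Prop :=
  sorted <%R p /\ p`_0 = 0 /\ last 0 p = 1.

Definition gaps (p : seq R) : seq R :=
  [seq p`_i.+1 - p`_i | i <- iota 0 (size p).-1].

Definition mesh (p : seq R) : R := \big[Num.max/0]_(g <- gaps p) g.

(* underline{p} : smallest interval length (all lengths of a partition of
   [0,1] are <= 1, so 1 is a neutral element here) *)
Definition mingap (p : seq R) : R := \big[Num.min/1]_(g <- gaps p) g.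

Definition finitely_refining (pi : nat -> seq R) : Prop :=
  [/\ pi 0%N = [:: 0; 1],
      (forall n, is_partition (pi n)),
      (forall n, {subset pi n <= pi n.+1}),
      (fun n => mesh (pi n)) @ \oo --> (0 : R)
    & exists M : nat, forall n i, (i < (size (pi n)).-1)%N ->
        (count (fun x => ((pi n)`_i <= x <= (pi n)`_i.+1)%R) (pi n.+1) <= M)%N].

Definition balanced (pi : nat -> seq R) : Prop :=
  exists K : R, forall n, (1 <= n)%N -> mesh (pi n) / mingap (pi n) <= K.

Definition sub_points (pi : nat -> seq R) (m i : nat) : seq R :=
  [seq x <- pi m.+1 | (pi m)`_i <= x <= (pi m)`_i.+1].

(* The level-m triples (t_1,t_2,t_3) = (u_0, u_{j-1}, u_j), j = 2..r,
   for each interval of pi^m in order; index k of the list is the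
   enumeration index of psi_{m,k}, e_{m,k}. *)
Definition haar_triples (pi : nat -> seq R) (m : nat) : seq (R * R * R) :=
  flatten [seq (let u := sub_points pi m i in
                [seq (u`_0, u`_j.-1, u`_j) | j <- iota 2 (size u).-2])
          | i <- iota 0 (size (pi m)).-1].

Definition ntriples (pi : nat -> seq R) (m : nat) : nat :=
  size (haar_triples pi m).

Definition trip (pi : nat -> seq R) (m k : nat) : R * R * R :=
  nth (0, 0, 0) (haar_triples pi m) k.
Definition tt1 pi m k : R := (trip pi m k).1.1.
Definition tt2 pi m k : R := (trip pi m k).1.2.
Definition tt3 pi m k : R := (trip pi m k).2.

Definition psi (pi : nat -> seq R) (m k : nat) (s : R) : R :=
  let t1 := tt1 pi m k in let t2 := tt2 pi m k in let t3 := tt3 pi m k in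
  if (t1 <= s) && (s < t2) then Num.sqrt ((t3 - t2) / ((t2 - t1) * (t3 - t1)))
  else if (t2 <= s) && (s < t3) then - Num.sqrt ((t2 - t1) / ((t3 - t2) * (t3 - t1)))
  else 0.

Definition dlt (p : seq R) (i : nat) (t : R) : R :=
  Num.min p`_i.+1 t - Num.min p`_i t.

Definition Ssum (p : seq R) (x y t : R) : R :=
  \sum_(i < (size p).-1 | (x <= p`_i) && (p`_i.+1 <= y)) (dlt p i t) ^+ 2.

Definition S1 pi n m k t := Ssum (pi n) (tt1 pi m k) (tt2 pi m k) t.
Definition S2 pi n m k t := Ssum (pi n) (tt2 pi m k) (tt3 pi m k) t.

Definition acoef (pi : nat -> seq R) (n m k : nat) (t : R) : R :=
  let t1 := tt1 pi m k in let t2 := tt2 pi m k in let t3 := tt3 pi m k in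
  (t3 - t1)^-1 * (S1 pi n m k t * ((t3 - t2) / (t2 - t1))
                  + S2 pi n m k t * ((t2 - t1) / (t3 - t2))).

Definition supp_sub (pi : nat -> seq R) (m k m' k' : nat) : bool :=
  (tt1 pi m' k' <= tt1 pi m k) && (tt3 pi m k <= tt3 pi m' k').

Definition supp_disj (pi : nat -> seq R) (m k m' k' : nat) : bool :=
  (tt3 pi m k <= tt1 pi m' k') || (tt3 pi m' k' <= tt1 pi m k).

Definition bnest (pi : nat -> seq R) (n m k m' k' : nat) (t : R) : R :=
  let t1 := tt1 pi m k in let t2 := tt2 pi m k in let t3 := tt3 pi m k in
  psi pi m' k' t1 * (S1 pi n m k t / (t2 - t1) - S2 pi n m k t / (t3 - t2))
  * Num.sqrt ((t2 - t1) * (t3 - t2) / (t3 - t1)).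

Definition bcoef (pi : nat -> seq R) (n m k m' k' : nat) (t : R) : R :=
  if supp_sub pi m k m' k' then bnest pi n m k m' k' t
  else if supp_sub pi m' k' m k then bnest pi n m' k' m k t
  else 0.

End Defs.

(* Main.v *)
Require Import Defs.
From HB Require Import structures.
From mathcomp Require Import all_boot all_order all_algebra.
From mathcomp Require Import all_classical all_reals all_analysis.
From mathcomp Require Import zify ring lra.
Import Order.TTheory GRing.Theory Num.Theory.
Set Implicit Arguments. Unset Strict Implicit.
Local Open Scope ring_scope.

Lemma srt_ltn (R : realType) (s : seq R) i j : sorted <%R s ->
  (i < size s)%N -> (j < size s)%N -> (i < j)%N -> s`_i < s`_j.
Proof. move=> Hs Hi Hj h; exact: (@sorted_ltn_nth R <%R (@lt_trans _ R) 0 s Hs). Qed.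

Lemma srt_le (R : realType) (s : seq R) i j : sorted <%R s ->
  (i < size s)%N -> (j < size s)%N -> (s`_i <= s`_j) = (i <= j)%N.
Proof.
move=> Hs Hi Hj; case: (ltngtP i j) => h.
- by apply/ltW; apply: srt_ltn.
- by rewrite leNgt srt_ltn.
- by rewrite h lexx.
Qed.

Lemma srt_lt (R : realType) (s : seq R) i j : sorted <%R s ->
  (i < size s)%N -> (j < size s)%N -> (s`_i < s`_j) = (i < j)%N.
Proof.
move=> Hs Hi Hj; rewrite ltNge (srt_le Hs Hj Hi); lia.
Qed.

Lemma mem_idx (R : realType) (s : seq R) x : x \in s -> exists2 a, (a < size s)%N & x = s`_a.
Proof. by move=> h; exists (index x s); rewrite ?index_mem ?nth_index. Qed.

Lemma window (T : Type) (idx : T) (op : Monoid.law idx) N a b F :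
  (a <= b)%N -> (b <= N)%N ->
  \big[op/idx]_(0 <= j < N) (if (a <= j < b)%N then F j else idx) =
  \big[op/idx]_(a <= j < b) F j.
Proof.
move=> hab hbN.
rewrite (@big_cat_nat _ _ op a 0 N) //; last by lia.
rewrite (@big_cat_nat _ _ op b a N) //.
rewrite big1_seq; last by move=> j /andP[_]; rewrite mem_index_iota => /andP[_ h]; rewrite leqNgt h.
rewrite Monoid.mul1m [X in op _ X]big1_seq ?Monoid.mulm1; last first.
  by move=> j /andP[_]; rewrite mem_index_iota => /andP[h _]; rewrite ltnNge h andbF.
by apply: (@eq_big_nat T idx op) => j ->.
Qed.

Lemma gap_sum (R : realType) (p : seq R) a b (F : nat -> R) : sorted <%R p ->
  (a <= b)%N -> (b < size p)%N ->
  \sum_(i < (size p).-1 | (p`_a <= p`_i) && (p`_i.+1 <= p`_b)) F i = \sum_(a <= i < b) F i.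
Proof.
move=> Hs hab hb.
rewrite big_mkcond /= -(big_mkord xpredT (fun i => if (p`_a <= p`_i) && (p`_i.+1 <= p`_b) then F i else 0)).
rewrite -(@window _ _ _ (size p).-1 a b F); [|done|lia].
rewrite big_nat_cond [RHS]big_nat_cond; apply: eq_bigr => i /andP[/andP[_ hi] _].
have h1 : (p`_a <= p`_i) = (a <= i)%N by apply: srt_le => //; lia.
have h2 : (p`_i.+1 <= p`_b) = (i < b)%N by apply: srt_le => //; lia.
by rewrite h1 h2.
Qed.

Lemma le_mesh (R : realType) (p : seq R) i : (i < (size p).-1)%N -> p`_i.+1 - p`_i <= mesh p.
Proof.
move=> hi; have : p`_i.+1 - p`_i \in gaps p.
  by apply/mapP; exists i => //; rewrite mem_iota.
rewrite /mesh; elim: (gaps p) => // g s IH; rewrite in_cons big_cons => /orP[/eqP->|/IH h].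
  by rewrite le_max lexx.
by rewrite le_max h orbT.
Qed.

Lemma ge_mingap (R : realType) (p : seq R) i : (i < (size p).-1)%N -> mingap p <= p`_i.+1 - p`_i.
Proof.
move=> hi; have : p`_i.+1 - p`_i \in gaps p.
  by apply/mapP; exists i => //; rewrite mem_iota.
rewrite /mingap; elim: (gaps p) => // g s IH; rewrite in_cons big_cons => /orP[/eqP->|/IH h].
  by rewrite ge_min lexx.
by rewrite ge_min h orbT.
Qed.

Lemma mesh_le (R : realType) (p : seq R) B : 0 <= B ->
  (forall i, (i < (size p).-1)%N -> p`_i.+1 - p`_i <= B) -> mesh p <= B.
Proof.
move=> hB h; rewrite /mesh /gaps big_map big_seq; apply: (big_ind (fun x => x <= B)) => //.
  by move=> x y hx hy; rewrite ge_max hx hy.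
by move=> i; rewrite mem_iota => /andP[_ hi]; apply: h; lia.
Qed.

Lemma mingap_gt0 (R : realType) (p : seq R) : sorted <%R p -> 0 < mingap p.
Proof.
move=> Hs; rewrite /mingap /gaps big_map big_seq; apply: (big_ind (fun x => 0 < x)) => //.
  by move=> x y hx hy; rewrite lt_min hx hy.
move=> i; rewrite mem_iota => /andP[_ hi]; rewrite subr_gt0; apply: srt_ltn => //; lia.
Qed.

Lemma mesh_ge0 (R : realType) (p : seq R) : 0 <= mesh p.
Proof.
rewrite /mesh; elim: (gaps p) => [|g s IH]; first by rewrite big_nil.
by rewrite big_cons le_max IH orbT.
Qed.

Lemma part_size (R : realType) (p : seq R) : is_partition p -> (1 < size p)%N.
Proof.
case=> Hs [h0 hl]; case: p Hs h0 hl => [|x [|y s]] //= _.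
  by move=> _ /eqP; rewrite eq_sym oner_eq0.
by move=> -> /eqP; rewrite eq_sym oner_eq0.
Qed.

Lemma part_le1 (R : realType) (p : seq R) j : is_partition p -> (j < size p)%N -> p`_j <= 1.
Proof.
move=> hp hj; have hs := part_size hp; case: hp => Hs [h0 hl].
rewrite -hl -nth_last; rewrite srt_le //. all: move: hj hs; case: (size p) => // n /=; lia.
Qed.

Lemma mesh_gt0 (R : realType) (p : seq R) : is_partition p -> 0 < mesh p.
Proof.
move=> hp; have hs := part_size hp; case: (hp) => Hs _.
apply: (@lt_le_trans _ _ (p`_1 - p`_0)); last by apply: le_mesh; lia.
by rewrite subr_gt0; apply: srt_ltn => //; lia.
Qed.

Lemma Ssum_bounds (R : realType) (p : seq R) a b : is_partition p ->
  (a <= b)%N -> (b < size p)%N ->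
  mingap p * (p`_b - p`_a) <= Ssum p p`_a p`_b 1 <= mesh p * (p`_b - p`_a).
Proof.
move=> hp hab hb; case: (hp) => Hs _.
have E : Ssum p p`_a p`_b 1 = \sum_(a <= i < b) (p`_i.+1 - p`_i) ^+ 2.
  rewrite /Ssum -(@gap_sum _ p a b (fun i => (p`_i.+1 - p`_i) ^+ 2)) //.
  apply: eq_bigr => i _; rewrite /dlt !min_l //; apply: part_le1 => //.
    by have := ltn_ord i; lia.
  by have := ltn_ord i; lia.
have T : p`_b - p`_a = \sum_(a <= i < b) (p`_i.+1 - p`_i).
  by rewrite (telescope_sumr (fun i => p`_i)).
rewrite E T !mulr_sumr; apply/andP; split; apply: ler_sum_nat => i /andP[h1 h2].
  rewrite expr2 ler_wpM2r //; last by apply: ge_mingap; lia.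
  by rewrite subr_ge0 srt_le //; lia.
rewrite expr2 ler_wpM2r //; last by apply: le_mesh; lia.
by rewrite subr_ge0 srt_le //; lia.
Qed.

Definition trip_ok (R : realType) (pi : nat -> seq R) m (t : R * R * R) : Prop :=
  [/\ t.1.1 < t.1.2, t.1.2 < t.2, t.1.1 \in pi m.+1, t.1.2 \in pi m.+1 & t.2 \in pi m.+1] /\
  exists2 i, (i < (size (pi m)).-1)%N & (pi m)`_i <= t.1.1 /\ t.2 <= (pi m)`_i.+1.

Lemma haar_ok (R : realType) (pi : nat -> seq R) m t : (forall n, is_partition (pi n)) ->
  t \in haar_triples pi m -> trip_ok pi m t.
Proof.
move=> hp /flattenP [s /mapP [i Hi ->]] /mapP [j Hj ->] /=.
rewrite mem_iota in Hi; rewrite mem_iota in Hj.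
set u := sub_points pi m i in Hj *.
have Hu : sorted <%R u by apply: sorted_filter; [exact: lt_trans | case: (hp m.+1)].
have hju : (j < size u)%N by move: Hj; case: (size u) => [|[|n]] /=; lia.
have memu x : x \in u -> x \in pi m.+1 /\ (pi m)`_i <= x <= (pi m)`_i.+1.
  by rewrite mem_filter => /andP[h1 h2].
have [m0 /andP[l0 _]] := memu _ (mem_nth 0 (leq_ltn_trans (leq0n j) hju)).
have [m1 _] := memu _ (mem_nth 0 (leq_ltn_trans (leq_pred j) hju)).
have [m2 /andP[_ l2]] := memu _ (mem_nth 0 hju).
split; first split => //.
- by apply: srt_ltn => //; [lia | lia | lia].
- by apply: srt_ltn => //; [lia | lia].
by exists i; [lia | split].
Qed.

Lemma trip_okk (R : realType) (pi : nat -> seq R) m k : (forall n, is_partition (pi n)) ->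
  (k < ntriples pi m)%N -> trip_ok pi m (trip pi m k).
Proof. by move=> hp hk; apply: haar_ok => //; apply: mem_nth. Qed.

Lemma sub_chain (R : realType) (pi : nat -> seq R) : (forall n, {subset pi n <= pi n.+1}) ->
  forall m n, (m <= n)%N -> {subset pi m <= pi n}.
Proof.
move=> hs m; elim=> [|n IH] hmn x hx.
  by move: hx; have -> : m = 0%N by lia.
case: (ltngtP m n.+1) hmn => // h _; last by rewrite -h.
by apply: hs; apply: IH => //; lia.
Qed.

Lemma count_window (R : realType) (q : seq R) a b : sorted <%R q -> (a <= b)%N -> (b < size q)%N ->
  (b.+1 - a <= count (fun x => (q`_a <= x <= q`_b)%R) q)%N.
Proof.
move=> Hq hab hb.
rewrite -sum1_count (big_nth 0) big_mkcond /=.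
have -> : (b.+1 - a = \sum_(a <= j < b.+1) 1)%N by rewrite sum_nat_const_nat muln1.
rewrite -(@window _ _ _ (size q) a b.+1 (fun _ => 1%N)) //.
rewrite [X in (X <= _)%N]big_seq [X in (_ <= X)%N]big_seq; apply: leq_sum => j.
rewrite mem_index_iota => /andP[_ hj]; case: ifP => // /andP[h1 h2].
  have e1 : (q`_a <= q`_j) = true by rewrite srt_le //; lia.
  have e2 : (q`_j <= q`_b) = true by rewrite srt_le //; lia.
  by rewrite e1 e2.
by lia.
Qed.

Lemma mingap_le_diff (R : realType) (q : seq R) x y : sorted <%R q -> x \in q -> y \in q -> x < y ->
  mingap q <= y - x.
Proof.
move=> Hq /mem_idx [a ha ->] /mem_idx [b hb ->]; rewrite srt_lt // => hab.
apply: (le_trans (ge_mingap (i:=a) _)); first by lia.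
have : q`_a.+1 <= q`_b by rewrite srt_le //; lia.
lra.
Qed.

Lemma mesh_step (R : realType) (pi : nat -> seq R) (M : nat) m :
  (forall n, is_partition (pi n)) -> (forall n, {subset pi n <= pi n.+1}) ->
  (forall n i, (i < (size (pi n)).-1)%N ->
        (count (fun x => ((pi n)`_i <= x <= (pi n)`_i.+1)%R) (pi n.+1) <= M)%N) ->
  mesh (pi m) <= M%:R * mesh (pi m.+1).
Proof.
move=> hp hs hM; apply: mesh_le; first by rewrite mulr_ge0 ?mesh_ge0.
move=> i hi; have [Hp _] := hp m; have [Hq _] := hp m.+1.
have hi1 : (i < size (pi m))%N by move: hi; case: (size (pi m)) => //= n; lia.
have hi2 : (i.+1 < size (pi m))%N by move: hi; case: (size (pi m)) => //= n; lia.
have [a ha ea] := mem_idx (hs _ _ (mem_nth 0 hi1)).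
have [b hb eb] := mem_idx (hs _ _ (mem_nth 0 hi2)).
have hlt : (pi m)`_i < (pi m)`_i.+1 by apply: srt_ltn.
have hab : (a < b)%N by rewrite -(srt_lt Hq) // -ea -eb.
have hc := hM m i hi; rewrite ea eb in hc.
have hc2 := count_window Hq (ltnW hab) hb.
have hba : (b - a <= M)%N by lia.
rewrite ea eb -(telescope_sumr (fun j => (pi m.+1)`_j)) ?(ltnW hab) //.
apply: (@le_trans _ _ (\sum_(a <= j < b) mesh (pi m.+1))).
  apply: ler_sum_nat => j /andP[h1 h2]; apply: le_mesh; move: hb; case: (size (pi m.+1)) => //= n; lia.
rewrite sumr_const_nat -(mulr_natl (mesh (pi m.+1)) (b - a)); apply: ler_wpM2r; [exact: mesh_ge0 | by rewrite ler_nat].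
Qed.

Lemma acoef_alg (R : realType) (g G x1 x2 x3 S1 S2 : R) : x1 < x2 -> x2 < x3 ->
  g * (x2 - x1) <= S1 <= G * (x2 - x1) -> g * (x3 - x2) <= S2 <= G * (x3 - x2) ->
  g <= (x3 - x1)^-1 * (S1 * ((x3 - x2) / (x2 - x1)) + S2 * ((x2 - x1) / (x3 - x2))) <= G.
Proof.
move=> h12 h23 /andP[a1 b1] /andP[a2 b2].
have d1 : 0 < x2 - x1 by rewrite subr_gt0.
have d2 : 0 < x3 - x2 by rewrite subr_gt0.
have d3 : 0 < x3 - x1 by rewrite subr_gt0; exact: lt_trans h23.
have r1 : 0 <= (x3 - x2) / (x2 - x1) by rewrite divr_ge0 // ltW.
have r2 : 0 <= (x2 - x1) / (x3 - x2) by rewrite divr_ge0 // ltW.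
have e1 : forall c, c * (x2 - x1) * ((x3 - x2) / (x2 - x1)) = c * (x3 - x2).
  by move=> c; field; rewrite lt0r_neq0.
have e2 : forall c, c * (x3 - x2) * ((x2 - x1) / (x3 - x2)) = c * (x2 - x1).
  by move=> c; field; rewrite lt0r_neq0.
have A1 := ler_wpM2r r1 a1; have B1 := ler_wpM2r r1 b1.
have A2 := ler_wpM2r r2 a2; have B2 := ler_wpM2r r2 b2.
rewrite e1 in A1; rewrite e1 in B1; rewrite e2 in A2; rewrite e2 in B2.
rewrite mulrC ler_pdivlMr // ler_pdivrMr //.
set u := S1 * _ in A1 B1 *; set v := S2 * _ in A2 B2 *.
have -> : g * (x3 - x1) = g * (x3 - x2) + g * (x2 - x1) by ring.
have -> : G * (x3 - x1) = G * (x3 - x2) + G * (x2 - x1) by ring.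
apply/andP; split; [exact: lerD A1 A2 | exact: lerD B1 B2].
Qed.

Lemma frac_le (R : realType) (a b g : R) : 0 < g -> g <= a -> 0 < b ->
  b / (a * (a + b)) <= g^-1.
Proof.
move=> hg hga hb; have ha : 0 < a by exact: lt_le_trans hga.
apply: (@le_trans _ _ a^-1).
  rewrite ler_pdivrMr ?mulr_gt0 ?addr_gt0 //.
  have -> : a^-1 * (a * (a + b)) = a + b by field; rewrite lt0r_neq0.
  lra.
by rewrite lef_pV2 ?posrE.
Qed.

Lemma psi_bound (R : realType) (pi : nat -> seq R) m k s g : 0 < g ->
  g <= tt2 pi m k - tt1 pi m k -> g <= tt3 pi m k - tt2 pi m k ->
  `|psi pi m k s| <= Num.sqrt g^-1.
Proof.
move=> hg h1 h2; rewrite /psi.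
set y1 := tt1 pi m k; set y2 := tt2 pi m k; set y3 := tt3 pi m k.
have hb : 0 <= g^-1 by rewrite invr_ge0 ltW.
case: ifP => _.
  rewrite ger0_norm ?sqrtr_ge0 // ler_sqrt //.
  have -> : y3 - y1 = (y2 - y1) + (y3 - y2) by ring.
  by apply: frac_le => //; exact: lt_le_trans h2.
case: ifP => _; last by rewrite normr0 sqrtr_ge0.
rewrite normrN ger0_norm ?sqrtr_ge0 // ler_sqrt //.
have -> : y3 - y1 = (y3 - y2) + (y2 - y1) by ring.
by apply: frac_le => //; exact: lt_le_trans h1.
Qed.

Lemma bnest_alg (R : realType) (ps g G gp K Mm Mp x1 x2 x3 S1 S2 : R) :
  `|ps| <= Num.sqrt gp^-1 -> x1 < x2 -> x2 < x3 -> x3 - x1 <= Mm ->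
  g * (x2 - x1) <= S1 <= G * (x2 - x1) -> g * (x3 - x2) <= S2 <= G * (x3 - x2) ->
  0 < gp -> 0 < Mp -> Mp <= K * gp ->
  `|ps * (S1 / (x2 - x1) - S2 / (x3 - x2)) * Num.sqrt ((x2 - x1) * (x3 - x2) / (x3 - x1))|
    <= Num.sqrt K * (G - g) * Num.sqrt (Mm / Mp).
Proof.
move=> hps h12 h23 hM /andP[a1 b1] /andP[a2 b2] hgp hMp hK.
have d1 : 0 < x2 - x1 by rewrite subr_gt0.
have d2 : 0 < x3 - x2 by rewrite subr_gt0.
have d3 : 0 < x3 - x1 by rewrite subr_gt0; exact: lt_trans h23.
have q1 : g <= S1 / (x2 - x1) <= G by rewrite ler_pdivlMr // ler_pdivrMr // a1 b1.
have q2 : g <= S2 / (x3 - x2) <= G by rewrite ler_pdivlMr // ler_pdivrMr // a2 b2.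
have hD : `|S1 / (x2 - x1) - S2 / (x3 - x2)| <= G - g.
  move: q1 q2 => /andP[u1 u2] /andP[v1 v2]; rewrite ler_norml; apply/andP; split; lra.
have hX : Num.sqrt ((x2 - x1) * (x3 - x2) / (x3 - x1)) <= Num.sqrt Mm.
  rewrite ler_sqrt; last by lra.
  apply: (@le_trans _ _ (x3 - x1)) => //.
  rewrite ler_pdivrMr //; nra.
have hinv : gp^-1 <= K * Mp^-1.
  rewrite -[gp^-1]div1r ler_pdivrMr // mulrAC ler_pdivlMr //; lra.
have hK0 : 0 <= K by have := lt_le_trans hMp hK; rewrite pmulr_lgt0 // => /ltW.
have hs : Num.sqrt gp^-1 <= Num.sqrt K * Num.sqrt Mp^-1.
  by rewrite -sqrtrM // ler_sqrt // mulr_ge0 // invr_ge0 ltW.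
rewrite !normrM (ger0_norm (sqrtr_ge0 _)).
apply: (@le_trans _ _ (Num.sqrt K * Num.sqrt Mp^-1 * (G - g) * Num.sqrt Mm)).
  apply: ler_pM; rewrite ?mulr_ge0 ?normr_ge0 ?sqrtr_ge0 //.
  apply: ler_pM; rewrite ?normr_ge0 //.
  exact: le_trans hps hs.
rewrite sqrtrM; last by lra.
have -> : Num.sqrt K * (G - g) * (Num.sqrt Mm * Num.sqrt Mp^-1) =
  Num.sqrt K * Num.sqrt Mp^-1 * (G - g) * Num.sqrt Mm by ring.
by [].
Qed.

Lemma disj_nsub (R : realType) (a1 a3 b1 b3 : R) : a1 < a3 -> b1 < b3 ->
  (a3 <= b1) || (b3 <= a1) -> ~~ ((b1 <= a1) && (a3 <= b3)).
Proof.
move=> h1 h2 /orP[] h3; apply/negP => /andP[h4 h5]; lra.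
Qed.

Unset Implicit Arguments. Set Strict Implicit.

Theorem mainTheorem6 (R : realType) (pi : nat -> seq R) :
  finitely_refining pi ->
  (forall n m k, (0 < n)%N -> (m < n)%N -> (k < ntriples pi m)%N ->
     mingap (pi n) <= acoef pi n m k 1 <= mesh (pi n))
  /\
  (balanced pi ->
   exists C : R, forall n m k m' k',
     (0 < n)%N -> (m < n)%N -> (m' < n)%N ->
     (k < ntriples pi m)%N -> (k' < ntriples pi m')%N ->
     (m, k) != (m', k') ->
     (supp_sub pi m k m' k' ->
        `|bcoef pi n m k m' k' 1|
          <= C * (mesh (pi n) - mingap (pi n)) * Num.sqrt (mesh (pi m) / mesh (pi m')))
     /\ (supp_disj pi m k m' k' -> bcoef pi n m k m' k' 1 = 0)).
Proof.
move=> [h0 hp hs hmesh [M hM]].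
have key : forall n m k, (m < n)%N -> (k < ntriples pi m)%N ->
   exists a1 a2 a3, [/\ (a1 < a2)%N && (a2 < a3)%N, (a3 < size (pi n))%N,
     tt1 pi m k = (pi n)`_a1, tt2 pi m k = (pi n)`_a2 & tt3 pi m k = (pi n)`_a3].
  move=> n m k hmn hk.
  have [[l12 l23 m1 m2 m3] _] := trip_okk hp hk.
  have sub := sub_chain hs hmn.
  have [Hp _] := hp n.
  have [a1 ha1 e1] := mem_idx (sub _ m1).
  have [a2 ha2 e2] := mem_idx (sub _ m2).
  have [a3 ha3 e3] := mem_idx (sub _ m3).
  exists a1, a2, a3; split => //.
  apply/andP; split.
    by rewrite -(srt_lt Hp) // -e1 -e2.
  by rewrite -(srt_lt Hp) // -e2 -e3.
split.
  move=> n m k hn hmn hk.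
  have [a1 [a2 [a3 [/andP[h12 h23] h3 e1 e2 e3]]]] := key n m k hmn hk.
  have [[l12 l23 _ _ _] _] := trip_okk hp hk.
  have B1 := Ssum_bounds (hp n) (ltnW h12) (ltn_trans h23 h3).
  have B2 := Ssum_bounds (hp n) (ltnW h23) h3.
  rewrite -e1 -e2 in B1; rewrite -e2 -e3 in B2.
  exact: acoef_alg l12 l23 B1 B2.
move=> [K hK].
exists (Num.sqrt (M%:R * K)) => n m k m' k' hn hmn hmn' hk hk' _.
have [[l12 l23 _ _ _] [i hi [hi1 hi3]]] := trip_okk hp hk.
have [[l12' l23' m1' m2' m3'] _] := trip_okk hp hk'.
split.
  move=> hsub; rewrite /bcoef hsub /bnest.
  have [a1 [a2 [a3 [/andP[h12 h23] h3 e1 e2 e3]]]] := key n m k hmn hk.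
  have B1 := Ssum_bounds (hp n) (ltnW h12) (ltn_trans h23 h3).
  have B2 := Ssum_bounds (hp n) (ltnW h23) h3.
  rewrite -e1 -e2 in B1; rewrite -e2 -e3 in B2.
  have [Hq _] := hp m'.+1.
  have gp0 := mingap_gt0 Hq.
  have hps : `|psi pi m' k' (tt1 pi m k)| <= Num.sqrt (mingap (pi m'.+1))^-1.
    by apply: psi_bound => //; apply: mingap_le_diff.
  have hMm : tt3 pi m k - tt1 pi m k <= mesh (pi m).
    apply: le_trans (le_mesh hi); rewrite /tt1 /tt3; lra.
  have hstep := mesh_step m' hp hs hM.
  have hbal : mesh (pi m'.+1) <= K * mingap (pi m'.+1).
    by rewrite -ler_pdivrMr // hK.
  have hM0 : (0 : R) <= M%:R by [].
  apply: (@bnest_alg R _ _ _ (mingap (pi m'.+1)) (M%:R * K)) => //; first exact: mesh_gt0.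
  apply: le_trans hstep _; rewrite -mulrA; apply: ler_wpM2l => //; exact: ler0n.
move=> hd; rewrite /bcoef.
have t13 : tt1 pi m k < tt3 pi m k by exact: lt_trans l12 l23.
have t13' : tt1 pi m' k' < tt3 pi m' k' by exact: lt_trans l12' l23'.
have -> : supp_sub pi m k m' k' = false by apply/negbTE; exact: disj_nsub.
have -> : supp_sub pi m' k' m k = false.
  by apply/negbTE; apply: disj_nsub => //; rewrite orbC.
by [].
Qed.
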